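(* Let $(\sigma,\rho)$ and $(\nu,\varrho)$ be two $G$-compatible pairs. The lattices $L_{(\sigma,\rho)}=\sigma^{-1}\mathbb Z^n\rtimes_\eta\rho\mathbb Z^m$ and $L_{(\nu,\varrho)}=\nu^{-1}\mathbb Z^n\rtimes_\eta\varrho\mathbb Z^m$ are commensurable if and only if $\nu\sigma^{-1}\in GL_n(\mathbb Q)$ and $\varrho^{-1}\rho\in GL_m(\mathbb Q)$.
   Context: Fix integers $1\le m\le n$. Let $\Delta_1,\dots,\Delta_m\in\mathbb R^{n\times n}$ be linearly independent, nonsingular, traceless diagonal matrices $\Delta_i=\mathrm{diag}(d_1^{(i)},\dots,d_n^{(i)})$ such that for each $i$, $d_k^{(i)}\neq d_j^{(i)}$ whenever $k\neq j$. For $t=(t_1,\dots,t_m)^T\in\mathbb R^m$ write $t\cdot\Delta=\sum_{i=1}^m t_i\Delta_i$ and $\eta(t)=e^{t\cdot\Delta}$. Let $G=\mathbb R^n\rtimes_\eta\mathbb R^m$ be the Lie group with underlying set $\mathbb R^n\times\mathbb R^m$ and multiplication $(x,t)(y,s)=(x+e^{t\cdot\Delta}y,\ t+s)$. A pair $(\sigma,\rho)\in GL_n(\mathbb R)\times GL_m(\mathbb R)$ is called $G$-compatible if $\sigma\exp(\rho^{(j)}\cdot\Delta)\sigma^{-1}\in SL_n(\mathbb Z)$ for all $j=1,\dots,m$, where $\rho^{(j)}$ is the $j$-th column of $\rho$. For such a pair, $\sigma^{-1}\mathbb Z^n\rtimes_\eta\rho\mathbb Z^m$ denotes the subgroup $\{(\sigma^{-1}v,\rho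 p): v\in\mathbb Z^n, p\in\mathbb Z^m\}$ of $G$, which is a lattice. Two lattices $\Gamma,\Gamma'$ in $G$ are commensurable if $[\Gamma:\Gamma\cap\Gamma']<\infty$ and $[\Gamma':\Gamma\cap\Gamma']<\infty$. *)

(* Defs.v *)
From HB Require Import structures.
From mathcomp Require Import all_boot all_order all_algebra.
From mathcomp Require Import reals sequences exp.
Set Implicit Arguments. Unset Strict Implicit. Unset Printing Implicit Defensive.
Import Order.TTheory GRing.Theory Num.Theory.
Local Open Scope ring_scope.

Section Defs.
Variables (R : realType) (n m : nat).

(* D i k = d_k^{(i)}; Delta_i = diag(d_1^{(i)}, ..., d_n^{(i)}). *)
Definition Delta (D : 'M[R]_(m, n)) (i : 'I_m) : 'M[R]_n := diag_mx (row i D).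

Definition tDelta (D : 'M[R]_(m, n)) (t : 'cV[R]_m) : 'M[R]_n :=
  \sum_(i < m) t i 0 *: Delta D i.

(* exp(t . Delta): the exponential of the diagonal matrix t . Delta,
   i.e. the diagonal matrix of the exponentials of its diagonal entries. *)
Definition eta (D : 'M[R]_(m, n)) (t : 'cV[R]_m) : 'M[R]_n :=
  diag_mx (\row_k expR (tDelta D t k k)).

Definition Delta_hyps (D : 'M[R]_(m, n)) : Prop :=
  [/\ ((1 <= m)%N /\ (m <= n)%N),
      (forall c : 'I_m -> R, \sum_(i < m) c i *: Delta D i = 0 -> forall i, c i = 0),
      (forall i, \det (Delta D i) != 0),
      (forall i, \tr (Delta D i) = 0) &
      (forall i (k j : 'I_n), k != j -> D i k != D i j)].

Definition G := ('cV[R]_n * 'cV[R]_m)%type.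
Definition gmul (D : 'M[R]_(m, n)) (a b : G) : G :=
  (a.1 + eta D a.2 *m b.1, a.2 + b.2).

Definition int_mx k (A : 'M[R]_k) : Prop := forall i j, A i j \is a Num.int.
Definition in_SLnZ (A : 'M[R]_n) : Prop := int_mx A /\ \det A = 1.

Definition is_rat (x : R) : Prop := exists q : rat, x = ratr q.
Definition in_GLQ k (A : 'M[R]_k) : Prop :=
  A \in unitmx /\ forall i j, is_rat (A i j).

Definition G_compatible (D : 'M[R]_(m, n)) (sigma : 'M[R]_n) (rho : 'M[R]_m) : Prop :=
  [/\ sigma \in unitmx, rho \in unitmx &
      forall j : 'I_m, in_SLnZ (sigma *m eta D (col j rho) *m invmx sigma)].

Definition lattice (sigma : 'M[R]_n) (rho : 'M[R]_m) (g : G) : Prop :=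
  exists (v : 'cV[int]_n) (p : 'cV[int]_m),
    g = (invmx sigma *m map_mx intr v, rho *m map_mx intr p).

Definition finite_index (D : 'M[R]_(m, n)) (K H : G -> Prop) : Prop :=
  exists s : seq G, (forall g, g \in s -> K g) /\
    forall k, K k -> exists2 g, g \in s & exists h, H h /\ k = gmul D g h.

Definition commensurable (D : 'M[R]_(m, n)) (L1 L2 : G -> Prop) : Prop :=
  let I := fun g => L1 g /\ L2 g in
  finite_index D L1 I /\ finite_index D L2 I.

End Defs.

(* Main.v *)
Require Import Defs.
From HB Require Import structures.
From mathcomp Require Import all_boot all_order all_algebra.
From mathcomp Require Import reals sequences exp.
Import Order.TTheory GRing.Theory Num.Theory.
Local Open Scope ring_scope.
Set Implicit Arguments. Unset Strict Implicit.

Lemma tDeltaD (R : realType) (n m : nat) (D : 'M[R]_(m, n)) (t s : 'cV[R]_m) :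
  tDelta D (t + s) = tDelta D t + tDelta D s.
Proof.
rewrite /tDelta -big_split /=; apply: eq_bigr => i _.
by rewrite mxE scalerDl.
Qed.

Lemma tDelta0 (R : realType) (n m : nat) (D : 'M[R]_(m, n)) :
  tDelta D 0 = 0.
Proof. by rewrite /tDelta big1 // => i _; rewrite mxE scale0r. Qed.

Lemma etaD (R : realType) (n m : nat) (D : 'M[R]_(m, n)) (t s : 'cV[R]_m) :
  Defs.eta D (t + s) = Defs.eta D t *m Defs.eta D s.
Proof.
rewrite /Defs.eta mul_diag_mx; apply/matrixP => i j.
rewrite !mxE tDeltaD mxE expRD.
by case: (i == j); rewrite ?mulr0n ?mulr0 ?mulr1n.
Qed.

Lemma eta0 (R : realType) (n m : nat) (D : 'M[R]_(m, n)) : Defs.eta D 0 = 1.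
Proof.
rewrite /Defs.eta tDelta0; apply/matrixP => i j; rewrite !mxE.
by rewrite expR0.
Qed.

Definition Econj (R : realType) (n m : nat) (D : 'M[R]_(m, n)) (s : 'M[R]_n) (t : 'cV[R]_m) :=
  s *m Defs.eta D t *m invmx s.

Lemma EconjD (R : realType) (n m : nat) (D : 'M[R]_(m, n)) (s : 'M[R]_n) (t u : 'cV[R]_m) :
  s \in unitmx -> Econj D s (t + u) = Econj D s t *m Econj D s u.
Proof.
move=> su; rewrite /Econj etaD !mulmxA; congr (_ *m _).
by rewrite -!mulmxA mulKmx.
Qed.

Lemma Econj0 (R : realType) (n m : nat) (D : 'M[R]_(m, n)) (s : 'M[R]_n) :
  s \in unitmx -> Econj D s 0 = 1.
Proof. by move=> su; rewrite /Econj eta0 mulmx1 mulmxV. Qed.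
Definition imx (R : realType) k l (A : 'M[R]_(k, l)) :=
  exists Z : 'M[int]_(k, l), A = map_mx intr Z.

Lemma int_mx_imx (R : realType) k (A : 'M[R]_k) : int_mx A -> imx A.
Proof.
move=> H.
have H2 : forall ij : 'I_k * 'I_k, exists z : int, A ij.1 ij.2 = z%:~R.
  by move=> [i j]; apply/intrP; apply: H.
have [f Hf] := boolp.choice H2.
exists (\matrix_(i, j) f (i, j)); apply/matrixP => i j; rewrite !mxE.
exact: (Hf (i, j)).
Qed.

Lemma imxM (R : realType) k l p (A : 'M[R]_(k, l)) (B : 'M[R]_(l, p)) :
  imx A -> imx B -> imx (A *m B).
Proof. by move=> [Za ->] [Zb ->]; exists (Za *m Zb); rewrite map_mxM. Qed.

Lemma imx_adj (R : realType) k (A : 'M[R]_k) : imx A -> imx (\adj A).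
Proof. by move=> [Za ->]; exists (\adj Za); rewrite map_mx_adj. Qed.

Lemma imx1 (R : realType) k : imx (1%:M : 'M[R]_k).
Proof. by exists 1%:M; rewrite map_mx1. Qed.

Lemma conj_int (R : realType) (n m : nat) (D : 'M[R]_(m, n)) (s : 'M[R]_n)
  (r : 'M[R]_m) : G_compatible D s r ->
  forall p : 'cV[int]_m, imx (Econj D s (r *m map_mx intr p)).
Proof.
case=> su ru H.
pose Q := fun p : 'cV[int]_m => imx (Econj D s (r *m map_mx intr p)).
have Q0 : Q 0 by rewrite /Q map_mx0 mulmx0 Econj0 //; apply: imx1.
have QD : forall p q, Q p -> Q q -> Q (p + q).
  by move=> p q Hp Hq; rewrite /Q map_mxD mulmxDr EconjD //; apply: imxM.
have Qe : forall j, Q (delta_mx j 0).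
  move=> j; rewrite /Q map_delta_mx -colE.
  by apply: int_mx_imx; case: (H j).
have Qne : forall j, Q (- delta_mx j 0).
  move=> j; rewrite /Q map_mxN mulmxN map_delta_mx -colE.
  have [_ Hdet] := H j.
  set c := col j r.
  have -> : Econj D s (- c) = \adj (Econj D s c).
    have E1 : Econj D s c *m \adj (Econj D s c) = 1%:M.
      by rewrite mul_mx_adj Hdet.
    by rewrite -[LHS]mulmx1 -E1 mulmxA -EconjD // addNr Econj0 // mul1mx.
  apply: imx_adj; have := Qe j; rewrite /Q map_delta_mx -colE //.
have Qn : forall x k, Q x -> Q (x *+ k).
  move=> x k Hx; elim: k => [|k IH]; first by rewrite mulr0n; exact: Q0.
  by rewrite mulrS; apply: QD; [exact: Hx | exact: IH].
have Qz : forall (z : int) j, Q (z *: delta_mx j 0).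
  move=> [k|k] j.
    by rewrite -natz scaler_nat; apply: Qn; exact: Qe.
  by rewrite NegzE scaleNr -scalerN -natz scaler_nat; apply: Qn; exact: Qne.
move=> p; rewrite (matrix_sum_delta p).
apply: (big_ind Q); [exact: Q0 | exact: QD | move=> i _].
apply: (big_ind Q); [exact: Q0 | exact: QD | move=> j _].
rewrite (ord1 j); exact: Qz.
Qed.

Lemma pigeon (R : realType) (n m : nat) (D : 'M[R]_(m, n))
  (H : G R n m -> Prop) (s : seq (G R n m)) (k : nat -> G R n m) :
  (forall a, exists2 g, g \in s & exists h, H h /\ k a = gmul D g h) ->
  exists a b, (a < b)%N /\ exists g h1 h2,
    [/\ H h1, H h2, k a = gmul D g h1 & k b = gmul D g h2].
Proof.
move=> Hk.
have Hk2 : forall a, exists g, g \in s /\ exists h, H h /\ k a = gmul D g h.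
  by move=> a; have [g gs Hg] := Hk a; exists g.
have [f Hf] := boolp.choice Hk2.
pose t := map (fun a => index (f a) s) (iota 0 (size s).+1).
have nu : ~~ uniq t.
  apply/negP => U.
  suff Hsub : {subset t <= iota 0 (size s)}.
    by have := uniq_leq_size U Hsub; rewrite size_map !size_iota ltnn.
  move=> x /mapP [a _ ->]; rewrite mem_iota add0n index_mem.
  by case: (Hf a).
have [i [j [lij ljt Eij]]] := uniqPn 0%N nu.
have lit : (i < size t)%N by apply: ltn_trans ljt.
rewrite size_map size_iota in ljt lit.
rewrite !(nth_map 0%N) ?size_iota // !nth_iota // !add0n in Eij.
have Efij : f i = f j.
  case: (Hf i) => fi _; case: (Hf j) => fj _.
  by rewrite -(nth_index (f i) fi) Eij (nth_index (f i) fj).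
exists i, j; split => //.
case: (Hf i) => _ [h1 [H1 E1]]; case: (Hf j) => _ [h2 [H2 E2]].
by exists (f i), h1, h2; split => //; rewrite Efij.
Qed.

Lemma rat_div (R : realType) (x : R) (d : nat) (z : int) :
  (0 < d)%N -> d%:R * x = z%:~R -> is_rat x.
Proof.
move=> d0 Hz; exists (z%:~R / d%:R).
rewrite fmorph_div rmorph_int rmorph_nat -Hz mulrC mulKf //.
by rewrite pnatr_eq0 -lt0n.
Qed.

Lemma rat_cols (R : realType) k (M : 'M[R]_k) :
  (forall j : 'I_k, exists d : nat, (0 < d)%N /\
     exists w : 'cV[int]_k, (M *m delta_mx j 0) *+ d = map_mx intr w) ->
  forall i j, is_rat (M i j).
Proof.
move=> H i j; have [d [d0 [w Hw]]] := H j.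
apply: (rat_div (d := d) (z := w i 0)) => //.
have := congr1 (fun X : 'cV[R]_k => X i 0) Hw.
by rewrite -colE -scaler_nat !mxE.
Qed.

Lemma subKK (V : zmodType) (g x y : V) : (g + x) - (g + y) = x - y.
Proof. by rewrite opprD addrACA subrr add0r. Qed.

Lemma onlyif (R : realType) (n m : nat) (D : 'M[R]_(m, n))
    (sigma nu : 'M[R]_n) (rho varrho : 'M[R]_m) :
  G_compatible D sigma rho -> G_compatible D nu varrho ->
  finite_index D (lattice sigma rho) (fun g => lattice sigma rho g /\ lattice nu varrho g) ->
  in_GLQ (nu *m invmx sigma) /\ in_GLQ (invmx varrho *m rho).
Proof.
move=> cs cn [s [_ Hs]].
have [su ru _] := cs; have [nuu vu _] := cn.
split; split.
- by rewrite unitmx_mul nuu unitmx_inv su.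
- apply: rat_cols => j.
  pose e : 'cV[int]_n := delta_mx j 0.
  pose k := fun a : nat => (invmx sigma *m map_mx intr (e *+ a), 0 : 'cV[R]_m) : G R n m.
  have Hk : forall a, lattice sigma rho (k a).
    by move=> a; exists (e *+ a), 0; rewrite map_mx0 mulmx0.
  have [a [b [lab [[g1 g2] [h1 [h2 [[_ L1] [_ L2] Ea Eb]]]]]]] :=
    pigeon (k := k) (fun a => Hs _ (Hk a)).
  case: L1 => [w1 [q1 E1]]; case: L2 => [w2 [q2 E2]]; subst h1 h2.
  move: Ea Eb; rewrite /gmul /= => -[Ea1 Ea2] [Eb1 Eb2].
  have Eg2 : g2 = varrho *m map_mx intr (- q1).
    by rewrite map_mxN mulmxN; apply/eqP; rewrite -addr_eq0 -Ea2.
  exists (b - a)%N; split; first by rewrite subn_gt0.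
  have [Bz HB] := conj_int cn (- q1).
  exists (Bz *m (w2 - w1)).
  rewrite map_mxM -HB /Econj -Eg2.
  have X : invmx sigma *m map_mx intr e *+ (b - a) =
      Defs.eta D g2 *m (invmx nu *m map_mx intr (w2 - w1)).
    rewrite -raddfMn -raddfMn (mulrnBr _ (ltnW lab)) raddfB raddfB /=.
    by rewrite Eb1 Ea1 subKK map_mxB !mulmxBr.
  have De : (delta_mx j 0 : 'cV[R]_n) = map_mx intr e by rewrite map_delta_mx.
  by rewrite -!mulmxA -raddfMn /= De X.
- by rewrite unitmx_mul unitmx_inv vu ru.
- apply: rat_cols => j.
  pose e : 'cV[int]_m := delta_mx j 0.
  pose k := fun a : nat => (0 : 'cV[R]_n, rho *m map_mx intr (e *+ a)) : G R n m.
  have Hk : forall a, lattice sigma rho (k a).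
    by move=> a; exists 0, (e *+ a); rewrite map_mx0 mulmx0.
  have [a [b [lab [[g1 g2] [h1 [h2 [[_ L1] [_ L2] Ea Eb]]]]]]] :=
    pigeon (k := k) (fun a => Hs _ (Hk a)).
  case: L1 => [w1 [q1 E1]]; case: L2 => [w2 [q2 E2]]; subst h1 h2.
  move: Ea Eb; rewrite /gmul /= => -[Ea1 Ea2] [Eb1 Eb2].
  exists (b - a)%N; split; first by rewrite subn_gt0.
  exists (q2 - q1).
  have X : rho *m map_mx intr e *+ (b - a) = varrho *m map_mx intr (q2 - q1).
    rewrite -raddfMn -raddfMn (mulrnBr _ (ltnW lab)) raddfB raddfB /=.
    by rewrite Eb2 Ea2 subKK map_mxB !mulmxBr.
  have De : (delta_mx j 0 : 'cV[R]_m) = map_mx intr e by rewrite map_delta_mx.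
  by rewrite -!mulmxA -raddfMn /= De X mulKmx.
Qed.

Lemma rat_den1 (R : realType) (x : R) : is_rat x ->
  exists d : nat, (0 < d)%N /\ exists z : int, d%:R * x = z%:~R.
Proof.
move=> [q ->]; exists (absz (denq q)); split.
  by rewrite absz_gt0 denq_neq0.
exists (numq q).
have -> : (absz (denq q))%:R = (denq q)%:~R :> R.
  have E : Posz (absz (denq q)) = denq q by rewrite abszE ger0_norm // denq_ge0.
  by rewrite -[in RHS]E.
have E2 := congr1 (@ratr R) (numqE q).
rewrite rmorphM /= !rmorph_int in E2.
by rewrite E2 mulrC.
Qed.

Lemma common_den (R : realType) (I : finType) (x : I -> R) :
  (forall i, is_rat (x i)) ->
  exists N : nat, (0 < N)%N /\ forall i, exists z : int, N%:R * x i = z%:~R.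
Proof.
move=> H.
have H2 := fun i => rat_den1 (H i).
have [d Hd] := boolp.choice H2.
exists (\prod_i d i)%N; split.
  by rewrite prodn_gt0 // => i; case: (Hd i).
move=> i; case: (Hd i) => _ [z Hz].
rewrite (bigD1 i) //= natrM (mulrC (d i)%:R) -mulrA Hz.
exists (z *+ (\prod_(j | j != i) d j)%N).
by rewrite raddfMn /= mulr_natl.
Qed.

Lemma rat_mx_den (R : realType) k l (A : 'M[R]_(k, l)) :
  (forall i j, is_rat (A i j)) ->
  exists N : nat, (0 < N)%N /\ exists Z : 'M[int]_(k, l), A *+ N = map_mx intr Z.
Proof.
move=> H.
have [N [N0 HN]] := common_den (fun ij : 'I_k * 'I_l => H ij.1 ij.2).
have [z Hz] := boolp.choice HN.
exists N; split => //; exists (\matrix_(i, j) z (i, j)).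
apply/matrixP => i j; rewrite mulmxnE !mxE -(Hz (i, j)) /=.
by rewrite mulr_natl.
Qed.

Lemma in_GLQ_inv (R : realType) k (A : 'M[R]_k) : in_GLQ A -> in_GLQ (invmx A).
Proof.
move=> [Au H].
have H2 : forall ij : 'I_k * 'I_k, exists q : rat, A ij.1 ij.2 = ratr q.
  by move=> [i j]; apply: H.
have [f Hf] := boolp.choice H2.
have EA : A = map_mx ratr (\matrix_(i, j) f (i, j)).
  by apply/matrixP => i j; rewrite !mxE -(Hf (i, j)).
split; first by rewrite unitmx_inv.
move=> i j; rewrite EA -map_invmx mxE.
by eexists.
Qed.

Definition colv k N (f : {ffun 'I_k -> 'I_N}) : 'cV[int]_k := \col_i ((f i : nat)%:Z).

Lemma divmod_vec k (N : nat) (p : 'cV[int]_k) :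
  p = (\col_i (divz (p i 0) N)) *+ N + \col_i (modz (p i 0) N).
Proof.
apply/matrixP => i j; rewrite (ord1 j) !mxE mulmxnE !mxE.
by rewrite -mulr_natr natz -divz_eq.
Qed.

Lemma colv_mod k N' (p : 'cV[int]_k) :
  colv [ffun i => (inord (absz (modz (p i 0) N'.+1)) : 'I_N'.+1)] =
  \col_i (modz (p i 0) N'.+1).
Proof.
apply/matrixP => i j; rewrite (ord1 j) !mxE ffunE.
have ge0 : 0 <= (modz (p i 0) N'.+1) by rewrite modz_ge0.
have E : Posz (absz (modz (p i 0) N'.+1)) = (modz (p i 0) N'.+1).
  by rewrite abszE ger0_norm.
rewrite inordK ?E //.
by rewrite -ltz_nat E ltz_pmod.
Qed.

Lemma mulmxMnl (R : realType) a b c (A : 'M[R]_(a, b)) (B : 'M[R]_(b, c)) k :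
  (A *+ k) *m B = (A *m B) *+ k.
Proof. by rewrite -!scaler_nat -scalemxAl. Qed.

Lemma mulmxMnr (R : realType) a b c (A : 'M[R]_(a, b)) (B : 'M[R]_(b, c)) k :
  A *m (B *+ k) = (A *m B) *+ k.
Proof. by rewrite -!scaler_nat -scalemxAr. Qed.

Lemma if_dir (R : realType) (n m : nat) (D : 'M[R]_(m, n))
    (sigma nu : 'M[R]_n) (rho varrho : 'M[R]_m) (N1 N2 : nat)
    (Z1 : 'M[int]_n) (Z2 : 'M[int]_m) :
  G_compatible D sigma rho -> nu \in unitmx -> varrho \in unitmx ->
  (0 < N1)%N -> (0 < N2)%N ->
  (nu *m invmx sigma) *+ N1 = map_mx intr Z1 ->
  (invmx varrho *m rho) *+ N2 = map_mx intr Z2 ->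
  finite_index D (lattice sigma rho)
    (fun g => lattice sigma rho g /\ lattice nu varrho g).
Proof.
move=> cs nuu vu; case: N1 => // N1 _; case: N2 => // N2 _ HZ1 HZ2.
have [su ru _] := cs.
have [A HA] := boolp.choice (conj_int cs).
pose s := [seq (invmx sigma *m map_mx intr (A (colv f2) *m colv f1),
                rho *m map_mx intr (colv f2)) : G R n m
          | f1 <- enum {ffun 'I_n -> 'I_N1.+1}, f2 <- enum {ffun 'I_m -> 'I_N2.+1}].
exists s; split.
  move=> g /allpairsP [[f1 f2] [_ _ ->]].
  by exists (A (colv f2) *m colv f1), (colv f2).
move=> _ [v [p ->]].
pose pr := \col_i (modz (p i 0) N2.+1).
pose pq := \col_i (divz (p i 0) N2.+1).
have Ep : p = pq *+ N2.+1 + pr by apply: divmod_vec.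
have [Bz HB] := conj_int cs (- pr).
pose u := Bz *m v.
pose r := \col_i (modz (u i 0) N1.+1).
pose w := \col_i (divz (u i 0) N1.+1).
have Eu : u = w *+ N1.+1 + r by apply: divmod_vec.
exists (invmx sigma *m map_mx intr (A pr *m r), rho *m map_mx intr pr).
  apply/allpairsP.
  exists ([ffun i => (inord (absz (modz (u i 0) N1.+1)) : 'I_N1.+1)],
          [ffun i => (inord (absz (modz (p i 0) N2.+1)) : 'I_N2.+1)]).
  by rewrite /= !mem_enum !colv_mod.
exists (invmx sigma *m map_mx intr (w *+ N1.+1), rho *m map_mx intr (pq *+ N2.+1)).
split; [split|].
- by exists (w *+ N1.+1), (pq *+ N2.+1).
- exists (Z1 *m w), (Z2 *m pq).
  congr (_, _).
    rewrite map_mxM -HZ1 raddfMn /= !mulmxMnl !mulmxMnr.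
    by rewrite -!mulmxA mulKmx.
  rewrite map_mxM -HZ2 raddfMn /= !mulmxMnl !mulmxMnr.
  by rewrite !mulmxA mulmxV // mul1mx.
- rewrite /gmul /=; congr (_, _).
    have Eta : Defs.eta D (rho *m map_mx intr pr) *m invmx sigma =
               invmx sigma *m map_mx intr (A pr).
      by rewrite -HA /Econj !mulmxA mulVmx // mul1mx.
    rewrite mulmxA Eta -mulmxA -map_mxM -mulmxDr -map_mxD -mulmxDr.
    congr (invmx sigma *m _).
    rewrite addrC -Eu /u mulmxA map_mxM map_mxM -HA -HB -EconjD //.
    by rewrite map_mxN mulmxN subrr Econj0 // mul1mx.
  by rewrite {1}Ep map_mxD mulmxDr addrC.
Qed.

Lemma inv_of (R : realType) k (X Y : 'M[R]_k) :
  X \in unitmx -> X *m Y = 1%:M -> invmx X = Y.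
Proof. by move=> Xu E; rewrite -(mulKmx Xu Y) E mulmx1. Qed.

Lemma inv_prod (R : realType) k (X Y : 'M[R]_k) :
  X \in unitmx -> Y \in unitmx -> invmx (X *m invmx Y) = Y *m invmx X.
Proof.
move=> Xu Yu; apply: inv_of; first by rewrite unitmx_mul Xu unitmx_inv.
by rewrite -mulmxA (mulmxA (invmx Y)) mulVmx // mul1mx mulmxV.
Qed.

Lemma inv_prod' (R : realType) k (X Y : 'M[R]_k) :
  X \in unitmx -> Y \in unitmx -> invmx (invmx X *m Y) = invmx Y *m X.
Proof.
move=> Xu Yu; apply: inv_of; first by rewrite unitmx_mul unitmx_inv Xu.
by rewrite -mulmxA (mulmxA Y) mulmxV // mul1mx mulVmx.
Qed.

Theorem mainTheorem5 (R : realType) (n m : nat) (D : 'M[R]_(m, n))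
    (sigma nu : 'M[R]_n) (rho varrho : 'M[R]_m) :
  Delta_hyps D ->
  G_compatible D sigma rho ->
  G_compatible D nu varrho ->
  (commensurable D (lattice sigma rho) (lattice nu varrho) <->
   in_GLQ (nu *m invmx sigma) /\ in_GLQ (invmx varrho *m rho)).
Proof.
move=> _ cs cn; split.
  by move=> [H1 _]; exact: onlyif cs cn H1.
move=> [Q1 Q2].
have [su ru _] := cs; have [nuu vu _] := cn.
have [N1 [N10 [Z1 HZ1]]] := rat_mx_den Q1.2.
have [N2 [N20 [Z2 HZ2]]] := rat_mx_den Q2.2.
have Q3 := in_GLQ_inv Q1; have Q4 := in_GLQ_inv Q2.
rewrite inv_prod // in Q3; rewrite inv_prod' // in Q4.
have [N3 [N30 [Z3 HZ3]]] := rat_mx_den Q3.2.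
have [N4 [N40 [Z4 HZ4]]] := rat_mx_den Q4.2.
split; first exact: if_dir cs nuu vu N10 N20 HZ1 HZ2.
have [s [Hs1 Hs2]] := if_dir cn su ru N30 N40 HZ3 HZ4.
exists s; split => // k Lk.
have [g gs [h [[Ha Hb] He]]] := Hs2 k Lk.
by exists g => //; exists h.
Qed.
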